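(* Let $T$ be an arbitrary $(\mathcal{F}_t^X)$-stopping time. Then $\mathcal{F}_T^X = \mathcal{F}_{T \wedge T_{\mathrm{expl}}}^X = \sigma\big(\bigcup_{n \geq 1} \mathcal{F}_{T \wedge T_n}^X\big)$.
   Context: $E$ is a closed subset of $\mathbb{R}^d$ and $E_\Delta = E \cup \{\Delta\}$ its one-point compactification. $\Omega$ is the space of càdlàg functions $\omega: \mathbb{R}_+ \to E_\Delta$ such that $\omega(t-) = \Delta$ or $\omega(t) = \Delta$ implies $\omega(s) = \Delta$ for all $s \geq t$. $X_t(\omega) := \omega(t)$ is the coordinate process, $\mathcal{F}^X := \sigma(X_s: s \ge 0)$ and $\mathcal{F}_t^X := \sigma(X_s : 0 \le s \le t)$. Let $\|\cdot\|$ be the Euclidean norm on $\mathbb{R}^d$ with $\|\Delta\| := \infty$. Define the stopping times $T_\Delta := \inf\{t : X_t = \Delta\}$, $T'_n := \inf\{t : \|X_{t-}\| \geq n \text{ or } \|X_t\| \geq n\}$ ($n \ge 1$), $T_{\mathrm{expl}} := T_\Delta$ if $T'_n < T_\Delta$ for all $n$, and $T_{\mathrm{expl}} := \infty$ if $T'_n = T_\Delta$ for some $n$; and $T_n := T'_n$ if $T'_n < T_\Delta$, $T_n := \infty$ if $T'_n = T_\Delta$. *)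

(* Defs.v *)
From HB Require Import structures.
From mathcomp Require Import all_boot all_order all_algebra.
From mathcomp Require Import all_classical all_reals all_analysis.
Set Implicit Arguments. Unset Strict Implicit. Unset Printing Implicit Defensive.
Import Order.TTheory GRing.Theory Num.Theory.
Import numFieldTopology.Exports numFieldNormedType.Exports.
Local Open Scope classical_set_scope.
Local Open Scope ring_scope.

Section PathSpace.
Variables (R : realType) (d : nat) (E : set 'rV[R]_d).

(* Points of E_Delta = E u {Delta} are encoded as [option 'rV[R]_d],
   [None] being the cemetery point Delta. *)
Definition EDelta := option 'rV[R]_d.

Definition euclid (x : 'rV[R]_d) : R := Num.sqrt (\sum_i (x ord0 i) ^+ 2).

Definition enorm (x : EDelta) : \bar R :=
  if x is Some y then (euclid y)%:E else +oo%E.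

(* Convergence in the one-point compactification E_Delta, as s -> t from the
   left (s in ]t - delta, t[) resp. from the right (s in ]t, t + delta[).
   Neighbourhoods of Delta are {Delta} u {x in E : ||x|| > M}. *)
Definition conv_on (I : R -> R -> set R) (f : R -> EDelta) (t : R) (l : EDelta) :=
  match l with
  | Some x => forall e : R, 0 < e -> exists2 del : R, 0 < del &
      forall s, I t del s -> exists2 y, f s = Some y & euclid (y - x) < e
  | None => forall M : R, exists2 del : R, 0 < del &
      forall s, I t del s -> (M%:E < enorm (f s))%E
  end.

Definition left_int (t del : R) : set R := [set s | t - del < s < t].
Definition right_int (t del : R) : set R := [set s | t < s < t + del].

Definition lconv := conv_on left_int.
Definition rconv := conv_on right_int.

(* Paths omega : R_+ -> E_Delta are represented as functions on R extended by
   omega(t) = omega(0) for t < 0 (so that omega(0-) = omega(0)). *)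
Definition is_path (w : R -> EDelta) : Prop :=
  [/\ (forall t, t < 0 -> w t = w 0),
      (forall t x, w t = Some x -> E x),
      (forall t, rconv w t (w t)),
      (forall t, exists l, lconv w t l)
    & (forall t, 0 <= t -> (lconv w t None \/ w t = None) ->
         forall s, t <= s -> w s = None)].

Definition Omega := {w : R -> EDelta | is_path w}.

Definition X (t : R) (w : Omega) : EDelta := proj1_sig w t.
Definition Xminus (t : R) (w : Omega) : EDelta :=
  xget None [set l | lconv (proj1_sig w) t l].

Definition borelRd : set (set 'rV[R]_d) := <<s [set U : set 'rV[R]_d | open U] >>.
Definition borelEDelta : set (set EDelta) :=
  [set B | borelRd ([set x | B (Some x)] `&` E)].

Definition genX (s : R) : set (set Omega) :=
  [set X s @^-1` B | B in borelEDelta].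

Definition Ft (t : R) : set (set Omega) :=
  <<s \bigcup_(s in [set s | 0 <= s <= t]) genX s >>.
Definition Finf : set (set Omega) :=
  <<s \bigcup_(s in [set s | 0 <= s]) genX s >>.

Definition stopping_time (T : Omega -> \bar R) : Prop :=
  (forall w, (0 <= T w)%E) /\
  (forall t : R, 0 <= t -> Ft t [set w | (T w <= t%:E)%E]).

Definition FT (T : Omega -> \bar R) : set (set Omega) :=
  [set A | Finf A /\
     forall t : R, 0 <= t -> Ft t (A `&` [set w | (T w <= t%:E)%E])].

Definition TDelta (w : Omega) : \bar R :=
  ereal_inf [set t%:E | t in [set t | 0 <= t /\ X t w = None]].

Definition T' (n : nat) (w : Omega) : \bar R :=
  ereal_inf [set t%:E | t in [set t | 0 <= t /\
     ((n%:R%:E <= enorm (Xminus t w))%E \/ (n%:R%:E <= enorm (X t w))%E)]].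

Definition Texpl (w : Omega) : \bar R :=
  if `[< forall n : nat, (0 < n)%N -> (T' n w < TDelta w)%E >]
  then TDelta w else +oo%E.

Definition Tn (n : nat) (w : Omega) : \bar R :=
  if (T' n w < TDelta w)%E then T' n w else +oo%E.

End PathSpace.

(* Main.v *)
Require Import Defs.
From HB Require Import structures.
From mathcomp Require Import all_boot all_order all_algebra.
From mathcomp Require Import all_classical all_reals all_analysis.
From mathcomp Require Import lra.
Import Order.TTheory GRing.Theory Num.Theory.
Import numFieldTopology.Exports numFieldNormedType.Exports.
Local Open Scope classical_set_scope.
Local Open Scope ring_scope.
Set Implicit Arguments. Unset Strict Implicit. Unset Printing Implicit Defensive.

Lemma sa0 (T : Type) (M : set (set T)) : sigma_algebra setT M -> M set0.
Proof. by case. Qed.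

Lemma saC (T : Type) (M : set (set T)) : sigma_algebra setT M ->
  forall A, M A -> M (~` A).
Proof. by case=> _ h _ A /h; rewrite setTD. Qed.

Lemma saT (T : Type) (M : set (set T)) : sigma_algebra setT M -> M setT.
Proof. by move=> h; rewrite -setC0; apply: saC => //; apply: sa0. Qed.

Lemma saU (T : Type) (M : set (set T)) : sigma_algebra setT M ->
  forall F : (set T)^nat, (forall k, M (F k)) -> M (\bigcup_k F k).
Proof. by case. Qed.

Lemma saI (T : Type) (M : set (set T)) : sigma_algebra setT M ->
  forall F : (set T)^nat, (forall k, M (F k)) -> M (\bigcap_k F k).
Proof.
move=> h F hF; rewrite -[X in M X]setCK setC_bigcap.
by apply: saC => //; apply: saU => // k; apply: saC.
Qed.

Lemma saU2 (T : Type) (M : set (set T)) : sigma_algebra setT M ->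
  forall A B, M A -> M B -> M (A `|` B).
Proof.
move=> h A B hA hB; rewrite -bigcup2E; apply: saU => // -[|[|k]] //=.
exact: sa0.
Qed.

Lemma saI2 (T : Type) (M : set (set T)) : sigma_algebra setT M ->
  forall A B, M A -> M B -> M (A `&` B).
Proof.
move=> h A B hA hB; rewrite -[X in M X]setCK setCI.
by apply: saC => //; apply: saU2 => //; apply: saC.
Qed.

Lemma saD (T : Type) (M : set (set T)) : sigma_algebra setT M ->
  forall A B, M A -> M B -> M (A `\` B).
Proof. by move=> h A B hA hB; apply: saI2 => //; apply: saC. Qed.

Lemma sas (T : Type) (G : set (set T)) : sigma_algebra setT <<s G >>.
Proof. exact: smallest_sigma_algebra. Qed.

Lemma Ft_gen (R : realType) (d : nat) (E : set 'rV[R]_d) (t s : R) (B : set (EDelta R d)) :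
  0 <= s <= t -> borelEDelta E B -> Ft t (X s @^-1` B : set (Omega E)).
Proof.
move=> st hB; apply: sub_sigma_algebra; exists s => //; exists B => //.
Qed.

Lemma Finf_gen (R : realType) (d : nat) (E : set 'rV[R]_d) (s : R) (B : set (EDelta R d)) :
  0 <= s -> borelEDelta E B -> Finf (X s @^-1` B : set (Omega E)).
Proof.
move=> st hB; apply: sub_sigma_algebra; exists s => //; exists B => //.
Qed.

Lemma Ft_mono (R : realType) (d : nat) (E : set 'rV[R]_d) (s t : R) :
  s <= t -> Ft s `<=` (Ft t : set (set (Omega E))).
Proof.
move=> st; apply: smallest_sub; first exact: sas.
move=> A [u /andP[u0 us] [B hB <-]]; apply: Ft_gen => //.
by rewrite u0 (le_trans us st).
Qed.

Lemma Ft_Finf (R : realType) (d : nat) (E : set 'rV[R]_d) (t : R) :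
  Ft t `<=` (@Finf R d E).
Proof.
apply: smallest_sub; first exact: sas.
move=> A [u /andP[u0 us] [B hB <-]]; exact: Finf_gen.
Qed.

Lemma borel_None (R : realType) (d : nat) (E : set 'rV[R]_d) :
  borelEDelta E [set x | x = None].
Proof.
rewrite /borelEDelta /= (_ : _ `&` _ = set0); first exact: sa0 (sas _).
by apply/seteqP; split => x //= [].
Qed.

Lemma borelRd_open (R : realType) (d : nat) (U : set 'rV[R]_d) : open U -> borelRd U.
Proof. by move=> oU; apply: sub_sigma_algebra. Qed.

Lemma borelRd_closed (R : realType) (d : nat) (U : set 'rV[R]_d) : closed U -> borelRd U.
Proof.
move=> cU; rewrite -[U]setCK; apply: (saC (sas _)).
by apply: borelRd_open; rewrite openC.
Qed.

Lemma euclid_continuous (R : realType) (d : nat) : continuous (@euclid R d).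
Proof.
move=> x.
have hs : {for x, continuous (fun y : 'rV[R]_d => \sum_i (y ord0 i) ^+ 2)}.
  rewrite -(fct_sumE _ _ (fun i (y : 'rV[R]_d) => (y ord0 i) ^+ 2)).
  apply: (big_ind (fun g : 'rV[R]_d -> R => {for x, continuous g})).
  - exact: cst_continuous.
  - by move=> f g hf hg; apply: continuousD.
  - move=> i _; rewrite /GRing.exp /=.
    by apply: (@continuousM _ _ (fun y : 'rV[R]_d => y ord0 i) (fun y => y ord0 i));
      apply: coord_continuous.
exact: (continuous_comp hs (@sqrt_continuous R _)).
Qed.

Lemma borel_gt (R : realType) (d : nat) (E : set 'rV[R]_d) (c : R) :
  closed E -> borelEDelta E [set x | (c%:E < enorm x)%E].
Proof.
move=> hE; rewrite /borelEDelta /=; apply: (saI2 (sas _)).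
  apply: borelRd_open.
  rewrite (_ : [set x | _] = @euclid R d @^-1` [set y | c < y]); last first.
    by apply/seteqP; split => x /=; rewrite lte_fin.
  by have /continuousP := @euclid_continuous R d; apply; exact: open_gt.
exact: borelRd_closed.
Qed.
Lemma euclid_ge0 (R : realType) (d : nat) (x : 'rV[R]_d) : 0 <= euclid x.
Proof. exact: sqrtr_ge0. Qed.

Lemma coord_le_euclid (R : realType) (d : nat) (v : 'rV[R]_d) j :
  `|v ord0 j| <= euclid v.
Proof.
rewrite /euclid -sqrtr_sqr ler_sqrt; last by rewrite sumr_ge0 // => i _; exact: sqr_ge0.
by rewrite (bigD1 j) //= lerDl sumr_ge0 // => i _; exact: sqr_ge0.
Qed.

Lemma euclid_near (R : realType) (d : nat) (x : 'rV[R]_d) (e : R) : 0 < e ->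
  exists2 del, 0 < del & forall y, euclid (y - x) < del -> `|euclid y - euclid x| < e.
Proof.
move=> e0.
have H : \forall t \near nbhs x, `|euclid x - euclid t| < e.
  by have := @euclid_continuous R d x => /cvgrPdist_lt; apply.
have [del del0 hdel] := (nbhs_ballP _ _).1 H; exists del => // y hy.
rewrite distrC; apply: hdel; split => // i j; rewrite (ord1 i) /ball /=.
apply: le_lt_trans hy; rewrite -opprB normrN.
by have := coord_le_euclid (y - x) j; rewrite !mxE.
Qed.
Lemma pathP (R : realType) (d : nat) (E : set 'rV[R]_d) (w : Omega E) :
  is_path E (proj1_sig w).
Proof. exact: proj2_sig w. Qed.

Lemma X_neg (R : realType) (d : nat) (E : set 'rV[R]_d) (w : Omega E) t :
  t < 0 -> X t w = X 0 w.
Proof. by case: (pathP w) => h _ _ _ _; apply: h. Qed.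

Lemma X_abs (R : realType) (d : nat) (E : set 'rV[R]_d) (w : Omega E) t s :
  0 <= t -> t <= s -> X t w = None -> X s w = None.
Proof.
case: (pathP w) => _ _ _ _ h t0 ts Xt; apply: (h t t0) => //; by right.
Qed.

Lemma X_rc (R : realType) (d : nat) (E : set 'rV[R]_d) (w : Omega E) t :
  rconv (proj1_sig w) t (X t w).
Proof. by case: (pathP w) => _ _ h _ _; apply: h. Qed.

Lemma Xminus_lim (R : realType) (d : nat) (E : set 'rV[R]_d) (w : Omega E) t :
  lconv (proj1_sig w) t (Xminus t w).
Proof. by case: (pathP w) => _ _ _ h _; apply: xgetPex; apply: h. Qed.

Lemma lconvNone (R : realType) (d : nat) (E : set 'rV[R]_d) (w : Omega E) t :
  0 <= t -> lconv (proj1_sig w) t None -> X t w = None.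
Proof.
case: (pathP w) => _ _ _ _ h t0 hl; apply: (h t t0 (or_introl hl)); exact: lexx.
Qed.

Lemma conv_euclid (R : realType) (d : nat) I (p : R -> EDelta R d) t x e :
  conv_on I p t (Some x) -> 0 < e ->
  exists2 del, 0 < del & forall s, I t del s ->
    exists2 z, p s = Some z & `|euclid z - euclid x| < e.
Proof.
move=> hc e0; have [del1 del10 h1] := euclid_near x e0.
have [del del0 h] := hc del1 del10; exists del => // s /h [z pz hz].
by exists z => //; apply: h1.
Qed.

Lemma local_bound (R : realType) (d : nat) (E : set 'rV[R]_d) (w : Omega E) r x y c :
  X r w = Some x -> lconv (proj1_sig w) r (Some y) ->
  euclid x < c -> euclid y < c ->
  exists2 del, 0 < del & forall u, `|u - r| < del -> (enorm (X u w) < c%:E)%E.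
Proof.
move=> Xr hl hx hy.
have hrc : rconv (sval w) r (Some x) by rewrite -Xr; exact: X_rc.
have [d1 d10 h1] := conv_euclid hrc (ltac:(by rewrite subr_gt0) : 0 < c - euclid x).
have [d2 d20 h2] := conv_euclid hl (ltac:(by rewrite subr_gt0) : 0 < c - euclid y).
exists (Order.min d1 d2); first by rewrite lt_min d10 d20.
have m1 : Order.min d1 d2 <= d1 by rewrite ge_min lexx.
have m2 : Order.min d1 d2 <= d2 by rewrite ge_min lexx orbT.
move=> u; rewrite ltr_distl => /andP[a1 a2].
case: (ltgtP u r) => ur.
- have [z pz hz] := h2 u (ltac:(rewrite /left_int /=; apply/andP; split => //; lra)).
  rewrite /X pz /= lte_fin; move: hz; rewrite ltr_norml => /andP[_]; lra.
- have [z pz hz] := h1 u (ltac:(rewrite /right_int /=; apply/andP; split => //; lra)).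
  rewrite /X pz /= lte_fin; move: hz; rewrite ltr_norml => /andP[_]; lra.
- by rewrite ur Xr /= lte_fin.
Qed.

Lemma left_bound (R : realType) (d : nat) (E : set 'rV[R]_d) (w : Omega E) s c del :
  0 < del -> (forall u, s - del < u < s -> (enorm (X u w) <= c%:E)%E) ->
  (enorm (Xminus s w) <= c%:E)%E.
Proof.
move=> del0 h; have := Xminus_lim w s.
case: (Xminus s w) => [y|] /= hl.
- rewrite lee_fin leNgt; apply/negP => cy.
  have [d1 d10 h1] := conv_euclid hl (ltac:(by rewrite subr_gt0) : 0 < euclid y - c).
  pose u := s - Order.min d1 del / 2.
  have m0 : 0 < Order.min d1 del by rewrite lt_min d10 del0.
  have m1 : Order.min d1 del <= d1 by rewrite ge_min lexx.
  have m2 : Order.min d1 del <= del by rewrite ge_min lexx orbT.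
  have [z pz hz] := h1 u (ltac:(rewrite /left_int /u /=; apply/andP; split; lra)).
  have := h u (ltac:(rewrite /u; apply/andP; split; lra)).
  rewrite /X pz /= lee_fin; move: hz; rewrite ltr_norml => /andP[hz _]; lra.
- have [d1 d10 h1] := hl c.
  pose u := s - Order.min d1 del / 2.
  have m0 : 0 < Order.min d1 del by rewrite lt_min d10 del0.
  have m1 : Order.min d1 del <= d1 by rewrite ge_min lexx.
  have m2 : Order.min d1 del <= del by rewrite ge_min lexx orbT.
  have := h1 u (ltac:(rewrite /left_int /u /=; apply/andP; split; lra)).
  have := h u (ltac:(rewrite /u; apply/andP; split; lra)).
  by move=> /le_lt_trans h2 /h2; rewrite ltxx.
Qed.
Lemma cpt (R : realType) (g : R -> \bar R) (a b : R) (F : set_system R) (FF : Filter F) :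
  (forall x, a <= x <= b -> exists c : R, (\forall M \near F, c <= M) /\
     exists2 del, 0 < del & forall u, `|u - x| < del -> (g u <= c%:E)%E) ->
  \forall M \near F, forall x, a <= x <= b -> (g x <= M%:E)%E.
Proof.
move=> h.
have cK : compact `[a, b]%classic := @segment_compact R a b.
have H := (compact_near_coveringP _).1 cK R F (fun M x => (g x <= M%:E)%E) FF.
have {}H := H _.
apply: filterS (H _) => [M HM x hx|]; first by apply: HM; rewrite /= in_itv /= hx.
move=> x; rewrite /= in_itv /= => /h [c [hc [del del0 hdel]]].
exists (ball x del, [set M | c <= M]); first by split => //; exact: nbhsx_ballx.
move=> [x' M] [/= bx cM]; apply: (le_trans (hdel x' _)); last by rewrite lee_fin.
by move: bx; rewrite /ball /= distrC.
Qed.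
Definition rat_enum (k : nat) : rat := odflt 0 (unpickle k).

Definition qseq (R : realType) (t : R) (k : nat) : R :=
  if k is k'.+1 then
    (if (0 <= ratr (rat_enum k') :> R) && (ratr (rat_enum k') <= t)
     then ratr (rat_enum k') else t)
  else t.

Lemma qseq_in (R : realType) (t : R) k : 0 <= t -> 0 <= qseq t k <= t.
Proof.
move=> t0; case: k => [|k] /=; first by rewrite t0 lexx.
by case: ifP => // _; rewrite t0 lexx.
Qed.

Lemma qseq_dense (R : realType) (t a b : R) : 0 <= a -> a < b -> b <= t ->
  exists k, a < qseq t k < b.
Proof.
move=> a0 ab bt; have [q] := rat_in_itvoo ab; rewrite in_itv /= => /andP[aq qb].
exists (pickle q).+1; rewrite /= /rat_enum pickleK /=.
have -> : (0 <= ratr q :> R) && (ratr q <= t).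
  by apply/andP; split; [exact: (le_trans a0 (ltW aq))|exact: (le_trans (ltW qb) bt)].
by rewrite aq qb.
Qed.

Lemma T'_ge0 (R : realType) (d : nat) (E : set 'rV[R]_d) (w : Omega E) n :
  (0 <= T' n w)%E.
Proof. by apply/ereal_infP => _ [s [s0 _] <-]; rewrite lee_fin. Qed.

Lemma TDelta_ge0 (R : realType) (d : nat) (E : set 'rV[R]_d) (w : Omega E) :
  (0 <= TDelta w)%E.
Proof. by apply/ereal_infP => _ [s [s0 _] <-]; rewrite lee_fin. Qed.

Lemma T'_le (R : realType) (d : nat) (E : set 'rV[R]_d) (w : Omega E) n s :
  0 <= s -> ((n%:R)%:E <= enorm (Xminus s w) \/ (n%:R)%:E <= enorm (X s w))%E ->
  (T' n w <= s%:E)%E.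
Proof. by move=> s0 h; apply: ge_ereal_inf; exists s%:E => //; exists s. Qed.
Lemma T'_le_qseq (R : realType) (d : nat) (E : set 'rV[R]_d) (w : Omega E) n t :
  0 <= t -> (T' n w <= t%:E)%E ->
  forall m : nat, exists k,
    (((n%:R - m.+1%:R^-1) : R)%:E < enorm (X (qseq t k) w))%E.
Proof.
move=> t0 HT m; apply/not_existsP => /= Hk.
set eps : R := m.+1%:R^-1.
have eps0 : 0 < eps by rewrite /eps invr_gt0 ltr0n.
set c0 : R := n%:R - eps.
have hk k : (enorm (X (qseq t k) w) <= c0%:E)%E.
  by rewrite leNgt; apply/negP; exact: Hk k.
have step1 : forall s, 0 <= s <= t -> (enorm (X s w) <= c0%:E)%E.
  move=> s /andP[s0 st]; case: (ltgtP s t) => [lst|lts|->]; last exact: (hk 0%N).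
  - rewrite leNgt; apply/negP => hs.
    case Xs: (X s w) => [x|]; last first.
      by have := hk 0%N; rewrite /= (X_abs s0 (ltW lst) Xs).
    move: hs; rewrite Xs /= lte_fin => hs.
    have hrc : rconv (sval w) s (Some x) by rewrite -Xs; exact: X_rc.
    have [del del0 hdel] := conv_euclid hrc (ltac:(by rewrite subr_gt0) : 0 < euclid x - c0).
    have m1 : s < Order.min (s + del) t by rewrite lt_min lst andbT ltrDl.
    have m2 : Order.min (s + del) t <= s + del by rewrite ge_min lexx.
    have [k /andP[k1 k2]] := qseq_dense s0 m1 (ltac:(by rewrite ge_min lexx orbT) : Order.min (s + del) t <= t).
    have [z pz hz] := hdel (qseq t k) (ltac:(rewrite /right_int /=; apply/andP; split => //; lra)).
    by have := hk k; rewrite /X pz /= lee_fin; move: hz; rewrite ltr_norml => /andP[hz _]; lra.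
  - by move: st; rewrite leNgt lts.
have [x Xt hx] : exists2 x, X t w = Some x & euclid x <= c0.
  by have := step1 t (ltac:(by rewrite t0 lexx)); case: (X t w) => [x|] //= h; exists x; rewrite // -lee_fin.
have hrc : rconv (sval w) t (Some x) by rewrite -Xt; exact: X_rc.
have [del del0 hdel] := conv_euclid hrc (ltac:(by rewrite divr_gt0) : 0 < eps / 2).
set c1 : R := n%:R - eps / 2.
have step3 : forall u, u < t + del -> (enorm (X u w) <= c1%:E)%E.
  move=> u ut; case: (ltP u 0) => u0.
    rewrite X_neg //; apply: le_trans (step1 0 _) _; first by rewrite lexx t0.
    by rewrite lee_fin /c0 /c1; lra.
  case: (leP u t) => ut'.
    by apply: le_trans (step1 u _) _; [rewrite u0 ut'|rewrite lee_fin /c0 /c1; lra].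
  have [z pz hz] := hdel u (ltac:(rewrite /right_int /=; apply/andP; split => //)).
  by rewrite /X pz /= lee_fin; move: hz; rewrite ltr_norml => /andP[_ hz]; move: hx; rewrite /c1 /c0; lra.
have step4 : forall s, s < t + del -> (enorm (Xminus s w) <= c1%:E)%E.
  by move=> s st; apply: (@left_bound _ _ _ _ _ _ 1) => // u /andP[_ us]; apply: step3; lra.
have : ((t + del)%:E <= T' n w)%E.
  apply/ereal_infP => _ [s [s0 hs] <-]; rewrite lee_fin leNgt; apply/negP => st.
  by case: hs => h; [have := step4 s st|have := step3 s st] => h';
    have := le_trans h h'; rewrite lee_fin /c1; lra.
by move=> h; have := le_trans h HT; rewrite lee_fin; lra.
Qed.
Lemma qseq_T'_le (R : realType) (d : nat) (E : set 'rV[R]_d) (w : Omega E) n t :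
  0 <= t ->
  (forall m : nat, exists k,
    (((n%:R - m.+1%:R^-1) : R)%:E < enorm (X (qseq t k) w))%E) ->
  (T' n w <= t%:E)%E.
Proof.
move=> t0 H; rewrite leNgt; apply/negP => tT.
have hs : forall s, 0 <= s <= t ->
    (enorm (X s w) < (n%:R)%:E)%E /\ (enorm (Xminus s w) < (n%:R)%:E)%E.
  move=> s /andP[s0 st]; split; rewrite ltNge; apply/negP => h.
  - have := T'_le s0 (or_intror h) => h'.
    by have := lt_le_trans tT (le_trans h' (ltac:(by rewrite lee_fin) : (s%:E <= t%:E)%E)); rewrite ltxx.
  - have := T'_le s0 (or_introl h) => h'.
    by have := lt_le_trans tT (le_trans h' (ltac:(by rewrite lee_fin) : (s%:E <= t%:E)%E)); rewrite ltxx.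
have hc : \forall M \near (n%:R : R)^'-, forall x, 0 <= x <= t ->
    (enorm (X x w) <= M%:E)%E.
  apply: cpt => s hs0; have [h1 h2] := hs s hs0.
  case Xs: (X s w) h1 => [x|] //= h1; rewrite lte_fin in h1.
  have hl := Xminus_lim w s; case Xm: (Xminus s w) h2 hl => [y|] //= h2 hl.
  rewrite lte_fin in h2.
  have mx : euclid x <= Num.max (euclid x) (euclid y) by rewrite le_max lexx.
  have my : euclid y <= Num.max (euclid x) (euclid y) by rewrite le_max lexx orbT.
  have mn : Num.max (euclid x) (euclid y) < n%:R by rewrite gt_max h1 h2.
  set c := (Num.max (euclid x) (euclid y) + n%:R) / 2.
  have [del del0 hdel] := local_bound Xs hl (ltac:(rewrite /c; lra) : euclid x < c)
    (ltac:(rewrite /c; lra) : euclid y < c).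
  exists c; split.
    by near=> M; apply: ltW; near: M; apply: nbhs_left_gt; rewrite /c; lra.
  by exists del => // u /hdel /ltW.
have [M [hM Mn]] : exists M : R, (forall x, 0 <= x <= t -> (enorm (X x w) <= M%:E)%E)
    /\ M < n%:R.
  apply: (@filter_ex _ ((n%:R : R)^'-)); near=> M; split.
    by near: M; exact: hc.
  by near: M; exact: nbhs_left_lt.
have [m hm] := ltr_add_invr Mn.
have [k hk] := H m.
have := lt_le_trans hk (hM (qseq t k) (qseq_in k t0)); rewrite lte_fin => h0.
move: hm h0; set u := m.+1%:R^-1; set v : R := n%:R; lra.
Unshelve. all: by end_near.
Qed.
Lemma T'_gt (R : realType) (d : nat) (E : set 'rV[R]_d) (w : Omega E) s :
  0 <= s -> X s w <> None -> exists n, (0 < n)%N /\ (s%:E < T' n w)%E.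
Proof.
move=> s0 Xs.
have hc : \forall M \near +oo, forall x, 0 <= x <= s ->
    (enorm (X x w) <= M%:E)%E.
  apply: cpt => r /andP[r0 rs].
  case Xr: (X r w) => [x|]; last by exfalso; apply: Xs; exact: X_abs r0 rs Xr.
  have hl := Xminus_lim w r; case Xm: (Xminus r w) hl => [y|] hl; last first.
    by exfalso; apply: Xs; apply: (X_abs r0 rs); exact: lconvNone r0 hl.
  have mx : euclid x <= Num.max (euclid x) (euclid y) by rewrite le_max lexx.
  have my : euclid y <= Num.max (euclid x) (euclid y) by rewrite le_max lexx orbT.
  set c := Num.max (euclid x) (euclid y) + 1.
  have [del del0 hdel] := local_bound Xr hl (ltac:(rewrite /c; lra) : euclid x < c)
    (ltac:(rewrite /c; lra) : euclid y < c).
  exists c; split; first exact: nbhs_pinfty_ge (num_real _).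
  by exists del => // u /hdel /ltW.
have [M hM] := filter_ex hc.
set n := (Num.trunc (`|M| + 1)).+1.
exists n; split => //.
rewrite ltNge; apply/negP => hT.
have [k hk] := T'_le_qseq s0 hT 0.
have := lt_le_trans hk (hM _ (qseq_in k s0)); rewrite lte_fin invr1 => h0.
have h1 : `|M| + 1 < n%:R.
  by have /andP[_] := truncn_itv (ltac:(by rewrite addr_ge0) : 0 <= `|M| + 1).
have h2 : M <= `|M| := ler_norm M.
move: h0 h1 h2; set v : R := n%:R; set a := `|M|; lra.
Qed.
Lemma TDelta_le (R : realType) (d : nat) (E : set 'rV[R]_d) (w : Omega E) t :
  0 <= t -> (TDelta w <= t%:E)%E <-> X t w = None.
Proof.
move=> t0; split; last first.
  by move=> Xt; apply: ge_ereal_inf; exists t%:E => //; exists t.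
move=> hT; case Xt: (X t w) => [x|] //; exfalso.
have hrc : rconv (sval w) t (Some x) by rewrite -Xt; exact: X_rc.
have [del del0 hdel] := conv_euclid hrc ltr01.
have : ((t + del)%:E <= TDelta w)%E.
  apply/ereal_infP => _ [s [s0 hs] <-]; rewrite lee_fin leNgt; apply/negP => st.
  case: (leP s t) => st'.
    by have := X_abs s0 st' hs; rewrite Xt.
  have [z pz _] := hdel s (ltac:(rewrite /right_int /=; apply/andP; split => //)).
  by move: hs; rewrite /X pz.
by move=> h; have := le_trans h hT; rewrite lee_fin; lra.
Qed.

Definition Expl (R : realType) (d : nat) (E : set 'rV[R]_d) (w : Omega E) :=
  forall n, (0 < n)%N -> (T' n w < TDelta w)%E.

Lemma TexplE (R : realType) (d : nat) (E : set 'rV[R]_d) (w : Omega E) :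
  Texpl w = if `[< Expl w >] then TDelta w else +oo%E.
Proof. by []. Qed.

Lemma Texpl_le (R : realType) (d : nat) (E : set 'rV[R]_d) (w : Omega E) t :
  (Texpl w <= t%:E)%E <-> (Expl w /\ (TDelta w <= t%:E)%E).
Proof.
rewrite TexplE; case: asboolP => h; first by split => // -[].
by split => // -[].
Qed.

Lemma Tn_le (R : realType) (d : nat) (E : set 'rV[R]_d) (w : Omega E) n t :
  (Tn n w <= t%:E)%E <-> ((T' n w <= t%:E)%E /\ (T' n w < TDelta w)%E).
Proof.
rewrite /Tn; case: ifP => h; first by split => // -[].
by split => // -[_ hh]; exfalso; move/negbT/negP: h; apply.
Qed.

Lemma Tn_ge0 (R : realType) (d : nat) (E : set 'rV[R]_d) (w : Omega E) n :
  (0 <= Tn n w)%E.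
Proof. by rewrite /Tn; case: ifP => _ //; exact: T'_ge0. Qed.

Lemma Texpl_ge0 (R : realType) (d : nat) (E : set 'rV[R]_d) (w : Omega E) :
  (0 <= Texpl w)%E.
Proof. by rewrite TexplE; case: asboolP => _ //; exact: TDelta_ge0. Qed.

Lemma Tn_le_Texpl (R : realType) (d : nat) (E : set 'rV[R]_d) (w : Omega E) n :
  (0 < n)%N -> (Tn n w <= Texpl w)%E.
Proof.
move=> n0; rewrite TexplE /Tn; case: asboolP => h; last exact: leey.
case: ifP => hh //; first exact: ltW.
by exfalso; move/negbT/negP: hh; apply; exact: h.
Qed.
Definition stopT (R : realType) (d : nat) (E : set 'rV[R]_d) (U : Omega E -> \bar R) :=
  forall t : R, 0 <= t -> Ft t [set w | (U w <= t%:E)%E].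

Lemma stop_T' (R : realType) (d : nat) (E : set 'rV[R]_d) (hE : closed E) n :
  stopT (fun w : Omega E => T' n w).
Proof.
move=> t t0.
rewrite (_ : [set w | _] = \bigcap_m \bigcup_k
   (X (qseq t k) @^-1` [set x | ((n%:R - m.+1%:R^-1 : R)%:E < enorm x)%E])).
  apply: (saI (sas _)) => m; apply: (saU (sas _)) => k.
  by apply: Ft_gen; [exact: qseq_in|exact: borel_gt].
apply/seteqP; split => w /=.
  by move=> h m _; have [k hk] := T'_le_qseq t0 h m; exists k.
move=> h; apply: qseq_T'_le => // m; have [k _ hk] := h m I; by exists k.
Qed.

Lemma stop_TD (R : realType) (d : nat) (E : set 'rV[R]_d) :
  stopT (fun w : Omega E => TDelta w).
Proof.
move=> t t0; rewrite (_ : [set w | _] = X t @^-1` [set x | x = None]).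
  by apply: Ft_gen; [rewrite t0 lexx|exact: borel_None].
by apply/seteqP; split => w /= /(TDelta_le w t0).
Qed.

Lemma stop_lt (R : realType) (d : nat) (E : set 'rV[R]_d) (U V : Omega E -> \bar R) :
  stopT U -> stopT V -> (forall w, (0 <= U w)%E) ->
  forall t, 0 <= t -> Ft t ([set w | (U w < V w)%E] `&` [set w | (V w <= t%:E)%E]).
Proof.
move=> hU hV U0 t t0.
rewrite (_ : _ `&` _ = \bigcup_k ([set w | (U w <= (qseq t k)%:E)%E] `&`
   ~` [set w | (V w <= (qseq t k)%:E)%E] `&` [set w | (V w <= t%:E)%E])).
  apply: (saU (sas _)) => k; have /andP[q0 qt] := qseq_in k t0.
  apply: (saI2 (sas _)); last exact: hV.
  apply: (saI2 (sas _)); first exact: (Ft_mono qt (hU _ q0)).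
  by apply: (saC (sas _)); exact: (Ft_mono qt (hV _ q0)).
apply/seteqP; split => w /=.
  move=> [UV Vt].
  have := U0 w; case Uw: (U w) UV => [u| |] UV u0;
    [|by move: UV; rewrite ltNge leey|by move: u0; rewrite leeNy_eq].
  move: UV Vt; case Vw: (V w) => [v| |] UV Vt;
    [|by move: Vt; rewrite leye_eq|by move: UV; rewrite ltNge leNye].
  rewrite lee_fin in u0.
  rewrite lte_fin in UV; rewrite lee_fin in Vt.
  have [k /andP[k1 k2]] := qseq_dense u0 UV Vt.
  exists k => //; split; [split|] => /=; rewrite ?Uw ?Vw.
  - by rewrite lee_fin ltW.
  - by apply/negP; rewrite -ltNge lte_fin.
  - by rewrite lee_fin.
move=> [k _ [[h1 h2] h3]]; split => //.
by apply: (le_lt_trans h1); rewrite ltNge; apply/negP.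
Qed.

Lemma stop_Texpl (R : realType) (d : nat) (E : set 'rV[R]_d) (hE : closed E) :
  stopT (fun w : Omega E => Texpl w).
Proof.
move=> t t0.
rewrite (_ : [set w | _] = [set w | (TDelta w <= t%:E)%E] `&` \bigcap_n
   ([set w | (T' n.+1 w < TDelta w)%E] `&` [set w | (TDelta w <= t%:E)%E])).
  apply: (saI2 (sas _)); first exact: stop_TD.
  apply: (saI (sas _)) => n; apply: stop_lt => //; [exact: stop_T'|exact: stop_TD|].
  by move=> w; exact: T'_ge0.
apply/seteqP; split => w /=.
  by move/Texpl_le => [hx ht]; split => // n _; split => //; exact: hx.
move=> [ht hn]; apply/Texpl_le; split => //.
by case=> // n _; have [] := hn n I.
Qed.

Lemma stop_Tn (R : realType) (d : nat) (E : set 'rV[R]_d) (hE : closed E) n :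
  stopT (fun w : Omega E => Tn n w).
Proof.
move=> t t0.
rewrite (_ : [set w | _] = [set w | (T' n w <= t%:E)%E] `&`
   (~` [set w | (TDelta w <= t%:E)%E] `|`
   ([set w | (T' n w < TDelta w)%E] `&` [set w | (TDelta w <= t%:E)%E]))).
  apply: (saI2 (sas _)); first exact: stop_T'.
  apply: (saU2 (sas _)); first by apply: (saC (sas _)); exact: stop_TD.
  apply: stop_lt => //; [exact: stop_T'|exact: stop_TD|].
  by move=> w; exact: T'_ge0.
apply/seteqP; split => w /=.
  move/Tn_le => [h1 h2]; split => //.
  by case: (boolP (TDelta w <= t%:E)%E) => h; [right|left; apply/negP].
move=> [h1 h2]; apply/Tn_le; split => //; case: h2 => [h|[]//].
by apply: (le_lt_trans h1); rewrite ltNge; apply/negP.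
Qed.

Lemma stop_min (R : realType) (d : nat) (E : set 'rV[R]_d) (U V : Omega E -> \bar R) :
  stopT U -> stopT V -> stopT (fun w => Order.min (U w) (V w)).
Proof.
move=> hU hV t t0.
rewrite (_ : [set w | _] = [set w | (U w <= t%:E)%E] `|` [set w | (V w <= t%:E)%E]).
  by apply: (saU2 (sas _)); [exact: hU|exact: hV].
by apply/seteqP; split => w /=; rewrite ge_min => /orP.
Qed.
Lemma FT_sa (R : realType) (d : nat) (E : set 'rV[R]_d) (U : Omega E -> \bar R) :
  stopT U -> sigma_algebra setT (FT U).
Proof.
move=> hU; split.
- split; first exact: (sa0 (sas _)).
  by move=> t t0; rewrite set0I; exact: (sa0 (sas _)).
- move=> A [hA hAt]; rewrite setTD; split; first exact: (saC (sas _)).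
  move=> t t0; rewrite (_ : _ `&` _ = [set w | (U w <= t%:E)%E] `\` (A `&` [set w | (U w <= t%:E)%E])).
    by apply: (saD (sas _)); [exact: hU|exact: hAt].
  by apply/seteqP; split => w /=; [move=> [nA h]; split => // -[]|move=> [h nA]; split => // hA'; apply: nA].
- move=> F hF; split; first by apply: (saU (sas _)) => k; case: (hF k).
  by move=> t t0; rewrite setI_bigcupl; apply: (saU (sas _)) => k; case: (hF k) => _; apply.
Qed.

Lemma FT_mono (R : realType) (d : nat) (E : set 'rV[R]_d) (U V : Omega E -> \bar R) :
  stopT V -> (forall w, (U w <= V w)%E) -> FT U `<=` FT V.
Proof.
move=> hV UV A [hA hAt]; split => // t t0.
rewrite (_ : _ `&` _ = (A `&` [set w | (U w <= t%:E)%E]) `&` [set w | (V w <= t%:E)%E]).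
  by apply: (saI2 (sas _)); [exact: hAt|exact: hV].
apply/seteqP; split => w /=; last by move=> [[]].
by move=> [hw h]; split => //; split => //; exact: le_trans (UV w) h.
Qed.

Lemma trace_None (R : realType) (d : nat) (E : set 'rV[R]_d) (B : set (Omega E)) t :
  Finf B -> 0 <= t -> Ft t (B `&` [set w | X t w = None]).
Proof.
move=> hB t0.
have hN : Ft t ([set w | X t w = None] : set (Omega E)).
  by apply: (Ft_gen (B := [set x | x = None])); [rewrite t0 lexx|exact: borel_None].
pose C := [set B : set (Omega E) | Ft t (B `&` [set w | X t w = None])].
suff : @Finf R d E `<=` C by apply.
apply: smallest_sub.
  split.
  - by rewrite /C /= set0I; exact: (sa0 (sas _)).
  - move=> A; rewrite /C /= setTD => hA.
    rewrite (_ : _ `&` _ = [set w | X t w = None] `\` (A `&` [set w | X t w = None])).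
      exact: (saD (sas _)).
    by apply/seteqP; split => w /=; [move=> [nA h]; split => // -[]|move=> [h nA]; split => // hA'; apply: nA].
  - by move=> F hF; rewrite /C /= setI_bigcupl; apply: (saU (sas _)).
move=> A [s /= s0 [B0 hB0 <-]]; rewrite /C /=.
case: (leP s t) => st.
  apply: (saI2 (sas _)) => //; apply: Ft_gen => //; by rewrite s0.
case: (pselect (B0 None)) => hn.
  rewrite (_ : _ `&` _ = [set w | X t w = None]) //.
  apply/seteqP; split => w /=; first by move=> [].
  by move=> h; split => //; rewrite (X_abs t0 (ltW st) h).
rewrite (_ : _ `&` _ = set0); first exact: (sa0 (sas _)).
apply/seteqP; split => w //= [h1 h2]; apply: hn.
by rewrite -(X_abs t0 (ltW st) h2).
Qed.
Lemma ereal_nat_bound (R : realType) (x : \bar R) :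
  (0 <= x)%E -> x != +oo%E -> exists m : nat, (x <= (m%:R : R)%:E)%E.
Proof.
case: x => [r| |] //; rewrite lee_fin => r0 _.
exists (Num.trunc r).+1; rewrite lee_fin; apply: ltW.
by have /andP[_] := truncn_itv r0.
Qed.

Lemma key (R : realType) (d : nat) (E : set 'rV[R]_d) (hE : closed E)
  (T : Omega E -> \bar R) (hTs : stopT T) (T0 : forall w, (0 <= T w)%E) n B :
  (0 < n)%N -> FT (fun w => Order.min (T w) (Texpl w)) B ->
  FT (fun w => Order.min (T w) (Tn n w)) (B `&` [set w | (T w <= Tn n w)%E]).
Proof.
move=> n0 [hB hBt].
have hSn : stopT (fun w => Order.min (T w) (Tn n w)) := stop_min hTs (stop_Tn hE n).
have hFt : forall t, 0 <= t -> Ft t ((B `&` [set w | (T w <= Tn n w)%E]) `&`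
    [set w | (Order.min (T w) (Tn n w) <= t%:E)%E]).
  move=> t t0.
  rewrite (_ : _ `&` _ = (B `&` [set w | (Order.min (T w) (Texpl w) <= t%:E)%E]) `&`
     ([set w | (T w <= t%:E)%E] `\` ([set w | (Tn n w < T w)%E] `&` [set w | (T w <= t%:E)%E]))).
    apply: (saI2 (sas _)); first exact: hBt.
    apply: (saD (sas _)); first exact: hTs.
    by apply: stop_lt => //; [exact: stop_Tn|move=> w; exact: Tn_ge0].
  apply/seteqP; split => w /=.
    move=> [[Bw K] hm]; rewrite (min_l K) in hm.
    have hTe : (T w <= Texpl w)%E := le_trans K (Tn_le_Texpl w n0).
    rewrite (min_l hTe); split => //; split => // -[h _].
    by have := lt_le_trans h K; rewrite ltxx.
  move=> [[Bw _] [Tt nK]].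
  have K : (T w <= Tn n w)%E.
    by rewrite leNgt; apply/negP => h; apply: nK.
  by split => //; rewrite (min_l K).
split => //.
rewrite (_ : _ `&` _ = (\bigcup_m ((B `&` [set w | (T w <= Tn n w)%E]) `&`
    [set w | (Order.min (T w) (Tn n w) <= (m%:R : R)%:E)%E])) `|`
    (B `&` ~` \bigcup_m [set w | (Order.min (T w) (Tn n w) <= (m%:R : R)%:E)%E])).
  apply: (saU2 (sas _)).
    by apply: (saU (sas _)) => m; apply: Ft_Finf; apply: hFt.
  apply: (saI2 (sas _)) => //; apply: (saC (sas _)); apply: (saU (sas _)) => m.
  by apply: Ft_Finf; apply: hSn.
have S0 : forall w, (0 <= Order.min (T w) (Tn n w))%E.
  by move=> w; rewrite le_min T0 Tn_ge0.
apply/seteqP; split => w /=.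
  move=> [Bw K]; case: (boolP (Order.min (T w) (Tn n w) == +oo%E)) => h.
    right; split => // -[m _] /=; rewrite (eqP h) leye_eq => /eqP.
    by [].
  have [m hm] := ereal_nat_bound (S0 w) h.
  by left; exists m.
case=> [[m _ []]|[Bw nb]] //.
have h : Order.min (T w) (Tn n w) = +oo%E.
  apply/eqP; apply: contrapT => h; apply: nb.
  have h' : Order.min (T w) (Tn n w) != +oo%E by apply/negP.
  by have [m hm] := ereal_nat_bound (S0 w) h'; exists m.
split => //.
have h1 : T w = +oo%E by apply/eqP; rewrite -leye_eq -h ge_min lexx.
have h2 : Tn n w = +oo%E by apply/eqP; rewrite -leye_eq -h ge_min lexx orbT.
by rewrite h1 h2.
Qed.
Definition Hset (R : realType) (d : nat) (E : set 'rV[R]_d) (T : Omega E -> \bar R) :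
  set (Omega E) := [set w | forall n, ~ (T w <= Tn n.+1 w)%E].

Lemma Hfacts (R : realType) (d : nat) (E : set 'rV[R]_d) (T : Omega E -> \bar R) w n :
  Hset T w -> (0 < n)%N ->
  (T' n w < TDelta w)%E /\ Order.min (T w) (Tn n w) = T' n w.
Proof.
move=> Hw n0; have := Hw n.-1; rewrite prednK // => h.
have : (Tn n w < T w)%E by rewrite ltNge; apply/negP.
rewrite /Tn; case: ifP => c lt.
  by split => //; rewrite min_r // ltW.
by rewrite ltNge leey in lt.
Qed.

Lemma trace2 (R : realType) (d : nat) (E : set 'rV[R]_d) (hE : closed E)
  (T : Omega E -> \bar R) (hTs : stopT T) (A : set (Omega E)) :
  Finf A -> exists A', <<s \bigcup_(n in [set n : nat | (0 < n)%N])
          FT (fun w => Order.min (T w) (Tn n w)) >> A' /\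
    A `&` Hset T = A' `&` Hset T.
Proof.
move=> hA.
set G := <<s _ >>.
have hSn : forall n, stopT (fun w => Order.min (T w) (Tn n w)).
  by move=> n; exact: stop_min hTs (stop_Tn hE n).
pose C := [set B | exists B', G B' /\ B `&` Hset T = B' `&` Hset T].
suff : @Finf R d E `<=` C by move/(_ A hA).
apply: smallest_sub.
  split.
  - by exists set0; split; [exact: (sa0 (sas _))|rewrite !set0I].
  - move=> B [B' [GB' eB]]; exists (~` B'); split; first exact: (saC (sas _)).
    rewrite setTD; apply/seteqP; split => w [nB Hw]; split => // hB'.
      by apply: nB; have : (B' `&` Hset T) w by []; rewrite -eB => -[].
    by apply: nB; have : (B `&` Hset T) w by []; rewrite eB => -[].
  - move=> F hF; have [f hf] := choice hF.
    exists (\bigcup_k f k); split; first by apply: (saU (sas _)) => k; case: (hf k).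
    by rewrite !setI_bigcupl; apply: eq_bigcupr => k _; case: (hf k).
move=> A0 [s /= s0 [B0 hB0 <-]].
exists ((\bigcup_n (X s @^-1` B0 `&` [set w | (s%:E < Order.min (T w) (Tn n.+1 w))%E]))
  `|` ([set _ | B0 None] `&` \bigcap_n [set w | (Order.min (T w) (Tn n.+1 w) <= s%:E)%E])).
split.
  apply: (saU2 (sas _)).
    apply: (saU (sas _)) => n; apply: sub_sigma_algebra; exists n.+1 => //.
    have eC : [set w | (s%:E < Order.min (T w) (Tn n.+1 w))%E] =
        ~` [set w | (Order.min (T w) (Tn n.+1 w) <= s%:E)%E].
      by apply/seteqP; split => w /=; rewrite ltNge => /negP.
    split.
      apply: (saI2 (sas _)); first exact: Finf_gen.
      by rewrite eC; apply: (saC (sas _)); apply: Ft_Finf; exact: hSn.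
    move=> t t0; case: (leP s t) => st.
      apply: (saI2 (sas _)); last exact: hSn.
      apply: (saI2 (sas _)); first by apply: Ft_gen => //; rewrite s0.
      by rewrite eC; apply: (saC (sas _)); exact: (Ft_mono st (hSn _ s s0)).
    rewrite (_ : _ `&` _ = set0); first exact: (sa0 (sas _)).
    apply/seteqP; split => w //= [[_ h1] h2].
    by have := lt_le_trans h1 h2; rewrite lte_fin; lra.
  apply: (saI2 (sas _)).
    case: (pselect (B0 None)) => hn.
      rewrite (_ : [set _ : Omega E | B0 None] = setT); first exact: (saT (sas _)).
      by apply/seteqP; split.
    rewrite (_ : [set _ : Omega E | B0 None] = set0); first exact: (sa0 (sas _)).
    by apply/seteqP; split.
  apply: (saI (sas _)) => n; apply: sub_sigma_algebra; exists n.+1 => //; split.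
    by apply: Ft_Finf; exact: hSn.
  move=> t t0; case: (leP s t) => st.
    by apply: (saI2 (sas _)); [exact: (Ft_mono st (hSn _ s s0))|exact: hSn].
  rewrite (_ : _ `&` _ = [set w | (Order.min (T w) (Tn n.+1 w) <= t%:E)%E]); first exact: hSn.
  apply/seteqP; split => w /=; first by case.
  by move=> h; split => //; apply: le_trans h _; rewrite lee_fin ltW.
apply/seteqP; split => w [h1 Hw]; split => //.
  case Xs: (X s w) => [x|].
    have [n [n0 hn]] := T'_gt s0 (ltac:(by rewrite Xs) : X s w <> None).
    left; exists n.-1 => //; split => //=.
    by rewrite prednK // (Hfacts Hw n0).2.
  right; split; first by rewrite /= -Xs.
  move=> n _ /=; have [hlt ->] := Hfacts Hw (ltn0Sn n).
  apply: ltW; apply: (lt_le_trans hlt); exact/(TDelta_le w s0).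
case: h1 => [[n _ [h1 _]]|[hBN hall]] //.
case Xs: (X s w) => [x|]; last by rewrite /= Xs.
have [n [n0 hn]] := T'_gt s0 (ltac:(by rewrite Xs) : X s w <> None).
have := hall n.-1 I; rewrite /= prednK // (Hfacts Hw n0).2 => h.
by have := lt_le_trans hn h; rewrite ltxx.
Qed.
Theorem proposition2p1 (R : realType) (d : nat) (E : set 'rV[R]_d)
  (hE : closed E) (T : Omega E -> \bar R) (hT : stopping_time T) :
  FT T = FT (fun w => Order.min (T w) (Texpl w)) /\
  FT (fun w => Order.min (T w) (Texpl w)) =
    <<s \bigcup_(n in [set n : nat | (0 < n)%N])
          FT (fun w => Order.min (T w) (Tn n w)) >>.
Proof.
have [T0 hTs] := hT.
have hTs' : stopT T := hTs.
have hS : stopT (fun w => Order.min (T w) (Texpl w)) := stop_min hTs' (stop_Texpl hE).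
have hSn : forall n, stopT (fun w => Order.min (T w) (Tn n w)).
  by move=> n; exact: stop_min hTs' (stop_Tn hE n).
split.
  apply/seteqP; split; last first.
    by apply: FT_mono => // w; rewrite ge_min lexx.
  move=> A [hA hAt]; split => // t t0.
  rewrite (_ : _ `&` _ = (A `&` [set w | (T w <= t%:E)%E]) `|`
     ((A `&` [set w | X t w = None]) `&` [set w | (Texpl w <= t%:E)%E])).
    apply: (saU2 (sas _)); first exact: hAt.
    apply: (saI2 (sas _)); first exact: trace_None.
    exact: stop_Texpl.
  apply/seteqP; split => w /=.
    move=> [Aw]; rewrite ge_min => /orP[h|h]; first by left.
    right; split => //; split => //.
    by move/Texpl_le: h => [_ /(TDelta_le w t0)].
  by case=> [[Aw h]|[[Aw _] h]]; split => //; rewrite ge_min h ?orbT.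
have GS : <<s \bigcup_(n in [set n : nat | (0 < n)%N])
          FT (fun w => Order.min (T w) (Tn n w)) >> `<=`
    FT (fun w => Order.min (T w) (Texpl w)).
  apply: smallest_sub; first exact: FT_sa.
  move=> A [n n0 hA]; apply: (FT_mono hS _ hA) => w.
  by rewrite le_min !ge_min lexx /= (Tn_le_Texpl w n0) !orbT.
apply/seteqP; split => // A hA.
have [A' [GA' eA]] := trace2 hE hTs' hA.1.
have hA' := GS _ GA'.
rewrite (_ : A = (\bigcup_n (A `&` [set w | (T w <= Tn n.+1 w)%E])) `|`
   (A' `&` ~` \bigcup_n (A' `&` [set w | (T w <= Tn n.+1 w)%E]))).
  apply: (saU2 (sas _)).
    apply: (saU (sas _)) => n; apply: sub_sigma_algebra; exists n.+1 => //.
    exact: key.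
  apply: (saI2 (sas _)) => //; apply: (saC (sas _)); apply: (saU (sas _)) => n.
  by apply: sub_sigma_algebra; exists n.+1 => //; exact: key.
apply/seteqP; split => w.
  move=> Aw; case: (pselect (exists n, (T w <= Tn n.+1 w)%E)) => [[n hn]|hn].
    by left; exists n.
  have Hw : Hset T w by move=> n hn'; apply: hn; exists n.
  have : (A' `&` Hset T) w by rewrite -eA.
  move=> [A'w _]; right; split => // -[n _ [_ hn']].
  by apply: hn; exists n.
case=> [[n _ [Aw _]]|[A'w nb]] //.
have Hw : Hset T w by move=> n hn; apply: nb; exists n.
have : (A `&` Hset T) w by rewrite eA.
by case.
Qed.
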